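(* Let $p_n\in(0,1)$ with $p_n\to1$, let $\tilde K=\tilde K_n=\frac{2\ln n}{1-p_n}$, and let $r_n>0$ satisfy $r_n=o(\tilde K^2)$. Then there are positive sequences $\delta_n\to0$ and $\varepsilon_n\to0$ with $\delta_n\tilde K\to\infty$ such that for any sequence of non-random graphs $R_n$ with $V(R_n)=[n]$ and $e(R_n)\le r_n$, the number $X_n$ of cliques of size $\lfloor\tilde K(1+\delta_n)\rfloor$ in $G(n,p_n)\vee R_n$ satisfies $\mathbb E\,X_n\le\varepsilon_n$.
   Context: $G(n,p)$ is the Erdős–Rényi random graph on $[n]$ with each edge present independently with probability $p$. For graphs $G,R$ on the same vertex set, $G\vee R$ is the graph on that vertex set with edge set $E(G)\cup E(R)$. $e(R)$ is the number of edges of $R$. *)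

(* Defs.v *)
From Stdlib Require Import Reals.
From HB Require Import structures.
From mathcomp Require Import all_boot.

Set Implicit Arguments.
Unset Strict Implicit.
Unset Printing Implicit Defensive.

(* A simple graph on vertex set [n] = 'I_n is given by its edge set:
   a set of 2-element subsets of 'I_n. *)
Definition pairs (n : nat) : {set {set 'I_n}} := [set e : {set 'I_n} | #|e| == 2].

Definition is_graph (n : nat) (E : {set {set 'I_n}}) : bool := E \subset pairs n.

Definition num_edges (n : nat) (E : {set {set 'I_n}}) : nat := #|E|.

Definition is_clique (n : nat) (E : {set {set 'I_n}}) (S : {set 'I_n}) : bool :=
  [forall x in S, forall y in S, (x != y) ==> ([set x; y] \in E)].

Definition num_cliques (n : nat) (E : {set {set 'I_n}}) (k : nat) : nat :=
  #|[set S : {set 'I_n} | (#|S| == k) && is_clique E S]|.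

Definition graph_join (n : nat) (G R : {set {set 'I_n}}) : {set {set 'I_n}} := G :|: R.

(* Probability that G(n,p) equals the graph with edge set G (G \subset pairs n):
   each of the C(n,2) pairs is present independently with probability p. *)
Definition gnp_prob (n : nat) (p : R) (G : {set {set 'I_n}}) : R :=
  Rmult (pow p #|G|) (pow (Rminus 1 p) (#|pairs n| - #|G|)).

(* E[ number of k-cliques in G(n,p) \/ R ], the expectation written out as
   the finite sum over all outcomes of G(n,p). *)
Definition exp_cliques_join (n : nat) (p : R) (Rg : {set {set 'I_n}}) (k : nat) : R :=
  \big[Rplus/R0]_(G : {set {set 'I_n}} | is_graph G)
     Rmult (gnp_prob p G) (INR (num_cliques (graph_join G Rg) k)).

Definition Ktilde (p : nat -> R) (n : nat) : R :=
  Rdiv (Rmult 2 (ln (INR n))) (Rminus 1 (p n)).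

(* floor of a real, as a natural number (x >= 0 in the cases of interest) *)
Definition nat_floor (x : R) : nat := Z.to_nat (Int_part x).

Definition little_o (a b : nat -> R) : Prop :=
  forall eps : R, Rlt 0 eps ->
    exists N : nat, forall n : nat, (N <= n)%coq_nat -> Rle (Rabs (a n)) (Rmult eps (Rabs (b n))).

(* Main.v *)
Require Import Defs.
From Stdlib Require Import Reals Lra Lia Psatz.
From HB Require Import structures.
From mathcomp Require Import all_boot.
From mathcomp Require Import Rstruct.
From mathcomp Require Import zify.

Set Implicit Arguments.
Unset Strict Implicit.
Unset Printing Implicit Defensive.

Section Core.
Local Open Scope R_scope.

Lemma prod_const_in (T : finType) (A : {set T}) (c : R) :
  \big[Rmult/1]_(e in A) c = c ^ #|A|.
Proof.
rewrite big_const; elim: #|A| => [|m IH] //=; by rewrite IH.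
Qed.

Lemma prod_if_in (T : finType) (A : {set T}) (c : R) :
  \big[Rmult/1]_e (if e \in A then c else 1) = c ^ #|A|.
Proof. by rewrite -big_mkcond prod_const_in. Qed.

Lemma prod_zero (T : finType) (F : T -> R) (e : T) : F e = 0 ->
  \big[Rmult/1]_i F i = 0.
Proof. move=> H; rewrite (bigD1 e) //= H; ring. Qed.

Lemma core (n : nat) (p : R) (F : {set {set 'I_n}}) : F \subset pairs n ->
  \big[Rplus/0]_(G | is_graph G) (gnp_prob p G * (if F \subset G then 1 else 0))
  = p ^ #|F|.
Proof.
move=> FP.
set P := pairs n.
pose f := fun e : {set 'I_n} => if e \in P then p else 0.
pose g := fun e : {set 'I_n} => if e \in P then (if e \in F then 0 else 1 - p) else 1.
have -> : p ^ #|F| = \big[Rmult/1]_e (f e + g e).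
  rewrite -prod_if_in; apply: eq_bigr => e _; rewrite /f /g.
  case eF: (e \in F); first by rewrite (subsetP FP _ eF); ring.
  case: (e \in P); ring.
rewrite bigA_distr big_mkcond /=.
apply: eq_bigr => J _.
rewrite /is_graph -/P.
case JP: (J \subset P); last first.
  move/negbT: JP => /subsetPn [e eJ eP].
  symmetry; apply: (prod_zero (e := e)); by rewrite eJ /f (negbTE eP).
case FJ: (F \subset J); last first.
  move/negbT: FJ => /subsetPn [e eF eJ].
  rewrite Rmult_0_r; symmetry; apply: (prod_zero (e := e)).
  by rewrite (negbTE eJ) /g (subsetP FP _ eF) eF.
rewrite Rmult_1_r /gnp_prob.
have -> : (#|P| - #|J|)%nat = #|P :\: J| by rewrite cardsD (setIidPr JP).
rewrite -!prod_if_in -big_split /=; apply: eq_bigr => e _.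
rewrite /f /g in_setD.
case eJ: (e \in J); first by rewrite (subsetP JP _ eJ) /=; ring.
case eP: (e \in P) => /=; last ring.
have -> : (e \in F) = false by apply/negbTE; apply: contraFN eJ; apply: (subsetP FJ).
ring.
Qed.

Lemma sum_const_in (T : finType) (A : {set T}) (c : R) :
  \big[Rplus/0]_(e in A) c = INR #|A| * c.
Proof.
rewrite big_const; elim: #|A| => [|m IH]; first by rewrite /=; ring.
rewrite S_INR Rmult_plus_distr_r -IH; simpl iter; ring.
Qed.

Lemma sum_le (T : finType) (P : pred T) (F1 F2 : T -> R) :
  (forall x, P x -> F1 x <= F2 x) ->
  \big[Rplus/0]_(x | P x) F1 x <= \big[Rplus/0]_(x | P x) F2 x.
Proof.
move=> H; apply: (big_ind2 (fun a b => a <= b)); [lra| |by []].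
move=> *; lra.
Qed.

Lemma sum_card_le (T : finType) (A B : {set T}) (c : T -> bool) :
  (forall x, x \in A -> (x \in B) && c x) ->
  INR #|A| <= \big[Rplus/0]_(x in B) (if c x then 1 else 0).
Proof.
move=> H; rewrite -[INR _]Rmult_1_r -sum_const_in !(big_mkcond (fun x => x \in _)) /=.
apply: sum_le => x _.
case xA: (x \in A); first by move: (H x xA) => /andP [-> ->]; lra.
case: (x \in B); case: (c x); lra.
Qed.

Lemma pow_le_dec (p : R) (a b : nat) : 0 <= p <= 1 -> (a <= b)%N -> p ^ b <= p ^ a.
Proof.
move=> hp hab; rewrite -(subnKC hab) pow_add.
have h1 : p ^ (b - a) <= 1 by rewrite -(pow1 (b - a)); apply: pow_incr; lra.
have h2 : 0 <= p ^ a by apply: pow_le; lra.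
nra.
Qed.

Lemma gnp_ge0 n (p : R) (G : {set {set 'I_n}}) : 0 <= p <= 1 -> 0 <= gnp_prob p G.
Proof. move=> hp; rewrite /gnp_prob; apply: Rmult_le_pos; apply: pow_le; lra. Qed.


Lemma expect_bound n (p : R) (Rg : {set {set 'I_n}}) (k : nat) :
  0 <= p <= 1 ->
  exp_cliques_join p Rg k <= INR 'C(n, k) * p ^ ('C(k, 2) - #|Rg|).
Proof.
move=> hp.
set SK := [set S : {set 'I_n} | #|S| == k].
pose F := fun S : {set 'I_n} => [set e in pairs n | (e \subset S) && (e \notin Rg)].
have FP : forall S, F S \subset pairs n.
  by move=> S; apply/subsetP => e; rewrite inE => /andP [].
have cardF : forall S, S \in SK -> ('C(k, 2) - #|Rg| <= #|F S|)%N.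
  move=> S; rewrite inE => /eqP <-.
  have -> : F S = [set e : {set 'I_n} | e \subset S & #|e| == 2%N] :\: Rg.
    apply/setP => e; rewrite !inE /pairs; by case: (e \in Rg); case: (e \subset S); case: (#|e| == 2%N).
  rewrite (@cardsD _ [set e : {set 'I_n} | e \subset S & #|e| == 2%N] Rg) cards_draws; apply: leq_sub2l; apply: subset_leq_card; exact: subsetIr.
have step1 : forall G : {set {set 'I_n}}, INR (num_cliques (graph_join G Rg) k)
    <= \big[Rplus/0]_(S in SK) (if F S \subset G then 1 else 0).
  move=> G; apply: sum_card_le => S; rewrite !inE => /andP [-> Hc] /=.
  apply/subsetP => e; rewrite inE /pairs inE => /andP [/cards2P [x [y [xy ->]]] /andP [sub nR]].
  have xS : x \in S by apply: (subsetP sub); rewrite !inE eqxx.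
  have yS : y \in S by apply: (subsetP sub); rewrite !inE eqxx orbT.
  move: Hc => /forallP /(_ x) /implyP /(_ xS) /forallP /(_ y) /implyP /(_ yS) /implyP /(_ xy).
  by rewrite /graph_join in_setU (negbTE nR) orbF.
rewrite /exp_cliques_join.
apply: (Rle_trans _ (\big[Rplus/0]_(G | is_graph G) (gnp_prob p G *
          \big[Rplus/0]_(S in SK) (if F S \subset G then 1 else 0)))).
  apply: sum_le => G _; apply: Rmult_le_compat_l; [exact: gnp_ge0 | exact: step1].
under eq_bigr => G _ do rewrite big_distrr /=.
rewrite exchange_big /=.
under eq_bigr => S _ do rewrite core //.
apply: (Rle_trans _ (\big[Rplus/0]_(S in SK) p ^ ('C(k, 2) - #|Rg|))).
  apply: sum_le => S SKS; apply: pow_le_dec => //; exact: cardF.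
rewrite sum_const_in /SK card_draws card_ord; apply: Rle_refl.
Qed.
End Core.

Lemma bin_le_pow n k : ('C(n, k) <= n ^ k)%N.
Proof.
apply: (leq_trans (leq_pmulr _ (fact_gt0 k))); rewrite bin_ffact ffact_prod.
apply: (leq_trans (leq_prod (E2 := fun _ => n) _)) => [i _|]; first exact: leq_subr.
by rewrite prod_nat_const card_ord.
Qed.

Section R.
Local Open Scope R_scope.
Lemma INR_bin2 k : 2 * INR 'C(k, 2) = INR k * (INR k - 1).
Proof.
elim: k => [|k IH]; first by rewrite /= ; ring.
rewrite binS bin1 -plusE plus_INR S_INR; lra.
Qed.

Lemma INR_subn a b : INR a - INR b <= INR (a - b)%N.
Proof.
case: (leqP b a) => h.
  rewrite -{1}(subnK h) -plusE plus_INR; lra.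
have -> : (a - b = 0)%N by apply/eqP; rewrite subn_eq0 ltnW.
move/ltP: h => /lt_INR; rewrite /=; lra.
Qed.

Lemma nat_floor_spec x : 0 <= x -> x - 1 < INR (nat_floor x) <= x.
Proof.
move=> hx; rewrite /nat_floor; have [h1 h2] := base_Int_part x.
have hz : (0 <= Int_part x)%Z.
  have : (-1 < Int_part x)%Z by apply: lt_IZR; lra.
  lia.
rewrite INR_IZR_INZ Znat.Z2Nat.id //; lra.
Qed.

Lemma ln0 : ln 0 = 0.
Proof. rewrite /ln; destruct (Rlt_dec 0 0) as [h|h]; [exact: (False_ind _ (Rlt_irrefl 0 h)) | reflexivity]. Qed.

Lemma ln_nat_ge0 n : 0 <= ln (INR n).
Proof.
case: n => [|n]; first by rewrite ln0; lra.
rewrite -ln_1; case: n => [|n]; first by rewrite /=; lra.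
left; apply: ln_increasing; first lra.
apply: lt_1_INR; lia.
Qed.

Lemma ln_big (M : R) : exists N : nat, forall n : nat, (N <= n)%coq_nat -> M <= ln (INR n).
Proof.
have [N hN] := INR_archimed 1 (exp M) ltac:(lra).
exists N => n hn.
have h1 : INR N <= INR n by apply: le_INR.
rewrite -(ln_exp M); left; apply: ln_increasing; first exact: exp_pos.
lra.
Qed.
End R.

Section Key.
Local Open Scope R_scope.
Lemma key (L q K a r d kk : R) : 100 <= L -> 0 < q <= 1 -> K * q = 2 * L -> 200 <= K ->
  0 <= a <= 1/64 -> r = a * (K * K + 1) -> 0 <= d -> 1 <= d * d * (K + 1) ->
  a <= d * d -> K * (1 + d) - 1 < kk -> kk <= K * (1 + d) ->
  kk * L - q * (kk * (kk - 1) / 2 - r) <= - L.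
Proof.
move=> hL hq hKq hK ha hr hd hdK hda hk1 hk2.
have A : 12 <= K * d.
  have h1 : 144 <= (K * d) * (K * d).
    have h2 : 144 * (K + 1) <= K * K by nra.
    have h3 : K * K <= (K * d) * (K * d) * (K + 1) by nra.
    nra.
  nra.
have B : 8 * a <= d.
  have h1 : (8 * a) * (8 * a) <= d * d by nra.
  nra.
have C : K / 2 <= kk by nra.
have E1 : kk * L - q * (kk * (kk - 1) / 2) = (q * kk / 2) * (K - kk + 1) by nra.
have E2 : (q * kk / 2) * (K - kk + 1) <= (q * kk / 2) * (2 - K * d).
  apply: Rmult_le_compat_l; nra.
have E4 : q * r <= 2 * a * L * K + a.
  rewrite hr; have -> : q * (a * (K * K + 1)) = a * K * (K * q) + a * q by ring.
  rewrite hKq; nra.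
have E3 : (q * kk / 2) * (2 - K * d) <= (q * K / 4) * (2 - K * d).
  have h1 : 0 <= q * kk / 2 - q * K / 4 by nra.
  have h2 : 0 <= K * d - 2 by lra.
  have := Rmult_le_pos _ _ h1 h2; nra.
have E5 : 2 * a * L * K <= L * K * d / 4.
  have h1 : 0 <= L * K by nra.
  have h2 : 0 <= d - 8 * a by lra.
  have := Rmult_le_pos _ _ h1 h2; nra.
have E6 : 2 * L + a <= L * K * d / 4 by nra.
have E7 : (q * K / 4) * (2 - K * d) = L - L * K * d / 2 by nra.
nra.
Qed.
End Key.

Lemma INR_expn n k : INR (n ^ k)%N = Rpow_def.pow (INR n) k.
Proof.
elim: k => [|k IH]; first by rewrite expn0.
by rewrite expnS -multE mult_INR IH.
Qed.

Lemma exp_le (x y : R) : Rle x y -> Rle (exp x) (exp y).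
Proof. move=> h; case: (Rle_lt_or_eq_dec _ _ h) => h'; [left; exact: exp_increasing | rewrite h'; exact: Rle_refl]. Qed.

Theorem mainTheorem11 (p r : nat -> R)
  (hp : forall n : nat, Rlt 0 (p n) /\ Rlt (p n) 1)
  (hp1 : Un_cv p 1)
  (hr : forall n : nat, Rlt 0 (r n))
  (hro : little_o r (fun n => Rmult (Ktilde p n) (Ktilde p n))) :
  exists delta eps : nat -> R,
    (forall n : nat, Rlt 0 (delta n)) /\
    (forall n : nat, Rlt 0 (eps n)) /\
    Un_cv delta 0 /\ Un_cv eps 0 /\
    cv_infty (fun n => Rmult (delta n) (Ktilde p n)) /\
    forall Rg : forall n : nat, {set {set 'I_n}},
      (forall n : nat, is_graph (Rg n)) ->
      (forall n : nat, Rle (INR (num_edges (Rg n))) (r n)) ->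
      forall n : nat,
        Rle (exp_cliques_join (p n) (Rg n)
               (nat_floor (Rmult (Ktilde p n) (Rplus 1 (delta n)))))
            (eps n).
Proof.
Local Open Scope R_scope.
pose K := Ktilde p.
have hq : forall n, 0 < 1 - p n <= 1 by move=> n; have := hp n; lra.
have hK0 : forall n, 0 <= K n.
  move=> n; rewrite /K /Ktilde /Rdiv; apply: Rmult_le_pos.
    have := ln_nat_ge0 n; lra.
  left; apply: Rinv_0_lt_compat; have := hp n; lra.
have hKq : forall n, K n * (1 - p n) = 2 * ln (INR n).
  move=> n; rewrite /K /Ktilde; field; have := hp n; lra.
have hK2 : forall n, 2 * ln (INR n) <= K n.
  move=> n; rewrite -hKq; have := hK0 n; have := hq n; nra.
pose a := fun n => r n / (K n * K n + 1).
have hKK : forall n, 0 < K n * K n + 1 by move=> n; have := hK0 n; nra.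
have ha0 : forall n, 0 <= a n.
  move=> n; rewrite /a /Rdiv; apply: Rmult_le_pos; [left; exact: hr | left; apply: Rinv_0_lt_compat; exact: hKK].
have hra : forall n, r n = a n * (K n * K n + 1).
  move=> n; rewrite /a; field; have := hKK n; lra.
pose d := fun n => sqrt (a n + / (K n + 1)).
have hinv : forall n, 0 < / (K n + 1) by move=> n; apply: Rinv_0_lt_compat; have := hK0 n; lra.
have hd2 : forall n, d n * d n = a n + / (K n + 1).
  move=> n; rewrite /d sqrt_sqrt //; have := ha0 n; have := hinv n; lra.
have hd0 : forall n, 0 < d n.
  move=> n; rewrite /d; apply: sqrt_lt_R0; have := ha0 n; have := hinv n; lra.
have hdK : forall n, 1 <= d n * d n * (K n + 1).
  move=> n; rewrite hd2 Rmult_plus_distr_r Rinv_l; last by have := hK0 n; lra.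
  have := ha0 n; have := hK0 n; nra.
have hda : forall n, a n <= d n * d n by move=> n; rewrite hd2; have := hinv n; lra.
have asmall : forall e, 0 < e -> exists N, forall n, (N <= n)%coq_nat -> a n <= e.
  move=> e he; have [N hN] := hro e he; exists N => n hn.
  have := hN n hn; rewrite (Rabs_pos_eq (r n)); last by left; exact: hr.
  rewrite (Rabs_pos_eq (Ktilde p n * Ktilde p n)); last by have := hK0 n; rewrite /K; nra.
  move=> h; rewrite /a /Rdiv; apply: (Rmult_le_reg_r (K n * K n + 1)); first exact: hKK.
  rewrite Rmult_assoc Rinv_l; last by have := hKK n; lra.
  rewrite /K; nra.
pose k := fun n => nat_floor (K n * (1 + d n)).
have hk : forall n, K n * (1 + d n) - 1 < INR (k n) <= K n * (1 + d n).
  move=> n; apply: nat_floor_spec; have := hK0 n; have := hd0 n; nra.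
have [N1 hN1] := ln_big 100.
have [N2 hN2] := asmall (1/64) ltac:(lra).
pose N := (N1 + N2)%nat.
have hNN1 : (N1 <= N)%coq_nat by rewrite /N; lia.
have hNN2 : (N2 <= N)%coq_nat by rewrite /N; lia.
have npos : forall n, (N <= n)%coq_nat -> 0 < INR n.
  move=> n hn; have := hN1 n ltac:(lia); case: n {hn} => [|n]; first by rewrite ln0; lra.
  move=> _; apply: lt_0_INR; lia.
have Ebd : forall n (Rg : {set {set 'I_n}}),
    exp_cliques_join (p n) Rg (k n) <= INR 'C(n, k n) * p n ^ ('C(k n, 2) - #|Rg|).
  move=> n Rg; apply: expect_bound; have := hp n; lra.
have big : forall n (Rg : {set {set 'I_n}}), (N <= n)%coq_nat -> INR #|Rg| <= r n ->
    exp_cliques_join (p n) Rg (k n) <= / INR n.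
  move=> n Rg hn hR.
  have hL := hN1 n ltac:(lia). have ha := hN2 n ltac:(lia).
  have hn0 := npos n hn.
  apply: Rle_trans (Ebd n Rg) _.
  set kk := k n; set m0 := ('C(kk, 2) - #|Rg|)%N.
  set L := ln (INR n) in hL *.
  have hC : INR 'C(n, kk) <= INR n ^ kk.
    rewrite -INR_expn; apply: le_INR; apply/leP; exact: bin_le_pow.
  have hp0 : 0 <= p n ^ m0 by apply: pow_le; have := hp n; lra.
  have hpe : p n ^ m0 <= exp (- (1 - p n)) ^ m0.
    apply: pow_incr; have := exp_ineq1_le (- (1 - p n)); have := hp n; lra.
  have e1 : INR n ^ kk = exp (INR kk * L).
    rewrite /L -ln_pow // exp_ln //; apply: pow_lt => //.
  have e2 : exp (- (1 - p n)) ^ m0 = exp (INR m0 * (- (1 - p n))).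
    have := ln_pow (exp (- (1 - p n))) (exp_pos _) m0; rewrite ln_exp => h.
    rewrite -h exp_ln //; apply: pow_lt; apply: exp_pos.
  apply: (Rle_trans _ (INR n ^ kk * exp (- (1 - p n)) ^ m0)).
    apply: Rmult_le_compat => //; exact: pos_INR.
  rewrite e1 e2 -exp_plus -(exp_ln (INR n)) // -exp_Ropp; apply: exp_le.
  have hm0 : INR 'C(kk, 2) - INR #|Rg| <= INR m0 by apply: INR_subn.
  have hb2 := INR_bin2 kk.
  have hkey := key (L := L) (q := 1 - p n) (K := K n) (a := a n) (r := r n) (d := d n) (kk := INR kk)
    hL (hq n) ltac:(rewrite hKq; done) ltac:(have := hK2 n; rewrite -/L; lra) ltac:(split; [exact: ha0 | exact: ha])
    (hra n) ltac:(left; exact: hd0) (hdK n) (hda n) (proj1 (hk n)) (proj2 (hk n)).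
  have hqq := hq n.
  have : (1 - p n) * (INR kk * (INR kk - 1) / 2 - r n) <= (1 - p n) * INR m0.
    apply: Rmult_le_compat_l; lra.
  rewrite /num_edges in hR; rewrite -/L; nra.
exists d, (fun n => if (N <= n)%N then / INR n else INR 'C(n, k n) + 1).
split; first exact: hd0.
split.
  move=> n; case: (leqP N n) => h.
    apply: Rinv_0_lt_compat; apply: npos; exact/leP.
  have := pos_INR 'C(n, k n); lra.
split.
  move=> e he; pose e' := e * e / 2.
  have he' : 0 < e' by rewrite /e'; nra.
  have [M1 hM1] := asmall e' he'.
  have [M2 hM2] := ln_big (/ e').
  exists (M1 + M2)%nat => n hn.
  rewrite /R_dist Rminus_0_r Rabs_pos_eq; last by left; exact: hd0.
  have h1 := hM1 n ltac:(lia).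
  have h2 := hM2 n ltac:(lia).
  have h3 := hK2 n.
  have h4 : 1 < e' * (K n + 1).
    have := Rinv_r e' ltac:(lra); have := Rinv_0_lt_compat e' he'; have := ln_nat_ge0 n; nra.
  have h5 : / (K n + 1) < e'.
    have := Rinv_l (K n + 1) ltac:(have := hK0 n; lra); have := hinv n; have := hK0 n; nra.
  have h6 : d n * d n < e * e by rewrite hd2 /e' in h1 h5 *; lra.
  have := hd0 n; nra.
split.
  move=> e he.
  have [m hm] := INR_archimed e 1 he.
  exists (N + m + 1)%nat => n hn.
  have hNn : (N <= n)%N by apply/leP; lia.
  rewrite hNn /R_dist Rminus_0_r.
  have hn0 := npos n ltac:(lia).
  rewrite Rabs_pos_eq; last by left; apply: Rinv_0_lt_compat.
  have hmn : INR m <= INR n by apply: le_INR; lia.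
  have := Rinv_r (INR n) ltac:(lra); have := Rinv_0_lt_compat _ hn0; nra.
split.
  move=> M.
  have [M3 hM3] := ln_big (M * M + 1).
  exists M3 => n hn.
  have h1 := hM3 n hn.
  have h2 := hK2 n.
  have h3 := hdK n.
  have h4 := hd0 n.
  have h5 : 1 <= K n by nra.
  have h6 : K n * K n <= (d n * K n) * (d n * K n) * (K n + 1) by nra.
  have h7 : (K n + 1) * (K n / 2) <= K n * K n by nra.
  have h8 : M * M < (d n * K n) * (d n * K n) by nra.
  change (M < d n * K n).
  have h9 : 0 <= d n * K n by have := hK0 n; nra.
  case: (Rle_or_lt (d n * K n) M) => hh; last lra.
  have := Rmult_le_compat _ _ _ _ h9 h9 hh hh; lra.
move=> Rg hg hRe n.
change (exp_cliques_join (p n) (Rg n) (k n) <= if (N <= n)%N then / INR n else INR 'C(n, k n) + 1).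
case: (leqP N n) => h.
  apply: big; [exact/leP | exact: hRe].
apply: Rle_trans (Ebd n (Rg n)) _.
have h1 : p n ^ ('C(k n, 2) - #|Rg n|) <= 1.
  rewrite -(pow1 ('C(k n, 2) - #|Rg n|)); apply: pow_incr; have := hp n; lra.
have h2 : 0 <= p n ^ ('C(k n, 2) - #|Rg n|) by apply: pow_le; have := hp n; lra.
have := pos_INR 'C(n, k n); nra.
Qed.
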